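(* Let $\bar p_{ij}>0$ ($i\in N=\{1,\dots,n\}$, $j\in M=\{1,\dots,m\}$) be given positive numbers. For a vector $f\in\mathbb{R}^n$ with positive components define $$\rho(f):=\frac{\max_{i\in N,j\in M}\bar p_{ij}/f_i}{\min_{i\in N,j\in M}\bar p_{ij}/f_i}.$$ Let $p^H_i:=\max_{j\in M}\bar p_{ij}$, $p^L_i:=\min_{j\in M}\bar p_{ij}$, $\rho_i:=p^H_i/p^L_i$, $\rho^*:=\max_{i\in N}\rho_i$, and $f^*_i:=\sqrt{p^L_ip^H_i}$. Then $\rho(f)\ge\rho^*$ for every positive vector $f$, and $\rho(f^* )=\rho^*$.
   Context: In the paper, $\bar p_{ij}$ is the optimal price of product $i$ for customer type $j$ under personalized pricing, and $\rho(f)=q_{\max}/q_{\min}$ determines the performance guarantee $1+\ln\rho(f)$ of pricing along the vector $f$; $f^*$ is called the robust factor. *)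

(* Defs.v *)
From mathcomp Require Import all_boot all_order all_algebra.
Set Implicit Arguments. Unset Strict Implicit. Unset Printing Implicit Defensive.
Import Order.TTheory GRing.Theory Num.Theory.
Local Open Scope ring_scope.

(* Customers/products indexed by 'I_n.+1 and 'I_m.+1 (nonempty index sets
   N = {1..n+1}, M = {1..m+1}).  Maxima and minima over nonempty finite sets
   are big max/min seeded with one of the elements (hence exact). *)

Section Defs.
Variables (R : realFieldType) (n m : nat).

Definition bmax (T : finType) (x0 : T) (F : T -> R) : R :=
  \big[Num.max/F x0]_(x : T) F x.
Definition bmin (T : finType) (x0 : T) (F : T -> R) : R :=
  \big[Num.min/F x0]_(x : T) F x.

Variable pbar : 'I_n.+1 -> 'I_m.+1 -> R.

Definition rho (f : 'I_n.+1 -> R) : R :=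
  bmax (ord0, ord0) (fun ij : 'I_n.+1 * 'I_m.+1 => pbar ij.1 ij.2 / f ij.1)
  / bmin (ord0, ord0) (fun ij : 'I_n.+1 * 'I_m.+1 => pbar ij.1 ij.2 / f ij.1).

Definition pH (i : 'I_n.+1) : R := bmax ord0 (fun j => pbar i j).
Definition pL (i : 'I_n.+1) : R := bmin ord0 (fun j => pbar i j).
Definition rho_i (i : 'I_n.+1) : R := pH i / pL i.
Definition rho_star : R := bmax ord0 rho_i.
End Defs.

Definition fstar (R : rcfType) n m (pbar : 'I_n.+1 -> 'I_m.+1 -> R)
  (i : 'I_n.+1) : R := Num.sqrt (pL pbar i * pH pbar i).

(* Main.v *)
Require Import Defs.
From mathcomp Require Import all_boot all_order all_algebra.
From mathcomp Require Import ring lra.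
Import Order.TTheory GRing.Theory Num.Theory.
Local Open Scope ring_scope.

Section Aux.
Variable R : realFieldType.
Variable T : finType.

Lemma bmax_ge (x0 x : T) (F : T -> R) : F x <= bmax x0 F.
Proof.
rewrite /bmax.
have: x \in index_enum T by rewrite mem_index_enum.
elim: (index_enum T) => [|y s IH] //=.
rewrite big_cons inE le_max.
by case/orP=> [/eqP->|/IH->]; rewrite ?lexx ?orbT.
Qed.

Lemma bmax_att (x0 : T) (F : T -> R) : exists x, bmax x0 F = F x.
Proof.
rewrite /bmax; elim: (index_enum T) => [|y s [z IH]].
  by exists x0; rewrite big_nil.
rewrite big_cons IH; case: (leP (F y) (F z)) => _.
  by exists z. by exists y.
Qed.

Lemma bmin_le (x0 x : T) (F : T -> R) : bmin x0 F <= F x.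
Proof.
rewrite /bmin.
have: x \in index_enum T by rewrite mem_index_enum.
elim: (index_enum T) => [|y s IH] //=.
rewrite big_cons inE ge_min.
by case/orP=> [/eqP->|/IH->]; rewrite ?lexx ?orbT.
Qed.

Lemma bmin_att (x0 : T) (F : T -> R) : exists x, bmin x0 F = F x.
Proof.
rewrite /bmin; elim: (index_enum T) => [|y s [z IH]].
  by exists x0; rewrite big_nil.
rewrite big_cons IH; case: (leP (F y) (F z)) => _.
  by exists y. by exists z.
Qed.
End Aux.
Arguments bmax_ge {R T}. Arguments bmin_le {R T}. Arguments bmax_att {R T}. Arguments bmin_att {R T}.

Lemma divle (R : realFieldType) (A B X Y : R) :
  0 < A -> A <= X -> 0 < Y -> Y <= B -> A / B <= X / Y.
Proof.
move=> A0 AX Y0 YB.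
have B0 : 0 < B by apply: lt_le_trans YB.
apply: ler_pM => //; [exact: ltW | by rewrite invr_ge0 ltW |].
by rewrite lef_pV2 ?posrE.
Qed.

Theorem theorem2 (R : rcfType) (n m : nat) (pbar : 'I_n.+1 -> 'I_m.+1 -> R)
  (hp : forall i j, 0 < pbar i j) :
  (forall f : 'I_n.+1 -> R, (forall i, 0 < f i) ->
     rho_star pbar <= rho pbar f) /\
  rho pbar (fstar pbar) = rho_star pbar.
Proof.
have pL0 : forall i, 0 < pL pbar i.
  by move=> i; case: (bmin_att ord0 (fun j => pbar i j)) => j; rewrite /pL => ->.
have pH0 : forall i, 0 < pH pbar i.
  by move=> i; case: (bmax_att ord0 (fun j => pbar i j)) => j; rewrite /pH => ->.
have part1 : forall f : 'I_n.+1 -> R, (forall i, 0 < f i) ->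
     rho_star pbar <= rho pbar f.
  move=> f f0.
  case: (bmax_att ord0 (rho_i pbar)) => i; rewrite /rho_star => ->.
  case: (bmax_att ord0 (fun j => pbar i j)) => jH HH.
  case: (bmin_att ord0 (fun j => pbar i j)) => jL HL.
  rewrite /rho_i /pH /pL HH HL /rho.
  have -> : pbar i jH / pbar i jL = (pbar i jH / f i) / (pbar i jL / f i).
    have := f0 i; have := hp i jL; move=> h1 h2.
    by field; rewrite ?gt_eqF.
  apply: divle.
  - by rewrite divr_gt0.
  - exact: (bmax_ge (ord0, ord0) (i, jH) (fun ij : 'I_n.+1 * 'I_m.+1 => pbar ij.1 ij.2 / f ij.1)).
  - case: (bmin_att (ord0, ord0) (fun ij : 'I_n.+1 * 'I_m.+1 => pbar ij.1 ij.2 / f ij.1)) => [[a b]] ->.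
    by rewrite /= divr_gt0.
  - exact: (bmin_le (ord0, ord0) (i, jL) (fun ij : 'I_n.+1 * 'I_m.+1 => pbar ij.1 ij.2 / f ij.1)).
split => //.
set s := fstar pbar.
have s0 : forall i, 0 < s i by move=> i; rewrite /s /fstar sqrtr_gt0 mulr_gt0.
have s2 : forall i, s i ^+ 2 = pL pbar i * pH pbar i.
  by move=> i; rewrite /s /fstar sqr_sqrtr // mulr_ge0 // ltW.
apply: le_anti; rewrite part1 // andbT.
set F := (fun ij : 'I_n.+1 * 'I_m.+1 => pbar ij.1 ij.2 / s ij.1).
rewrite /rho -/F.
case: (bmax_att (ord0, ord0) F) => [[a b]] ->.
case: (bmin_att (ord0, ord0) F) => [[c d]] ->.
rewrite /F /=.
have rs0 : 0 <= rho_star pbar.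
  apply: le_trans (bmax_ge ord0 ord0 (rho_i pbar)).
  by rewrite /rho_i divr_ge0 // ltW.
have Xp : 0 < pbar a b / s a by rewrite divr_gt0.
have Yp : 0 < pbar c d / s c by rewrite divr_gt0.
have X2 : (pbar a b / s a) ^+ 2 <= rho_star pbar.
  apply: le_trans (bmax_ge ord0 a (rho_i pbar)).
  apply: (@le_trans _ _ ((pH pbar a / s a) ^+ 2)).
    have h1 := ltW Xp; have h2 : 0 <= pH pbar a / s a by rewrite divr_ge0 // ltW.
    rewrite ler_sqr ?nnegrE //.
    rewrite ler_pM2r ?invr_gt0 //.
    exact: (bmax_ge ord0 b (fun j => pbar a j)).
  rewrite expr_div_n s2 /rho_i.
  have := pL0 a; have := pH0 a => h1 h2.
  by rewrite le_eqVlt; apply/orP; left; apply/eqP; field; rewrite ?gt_eqF.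
have Y2 : (pbar c d / s c)^-1 ^+ 2 <= rho_star pbar.
  apply: le_trans (bmax_ge ord0 c (rho_i pbar)).
  apply: (@le_trans _ _ ((pL pbar c / s c)^-1 ^+ 2)).
    have h1 : 0 <= (pbar c d / s c)^-1 by rewrite invr_ge0 ltW.
    have h2 : 0 <= (pL pbar c / s c)^-1 by rewrite invr_ge0 divr_ge0 // ltW.
    rewrite ler_sqr ?nnegrE //.
    rewrite lef_pV2 ?posrE ?divr_gt0 //.
    rewrite ler_pM2r ?invr_gt0 //.
    exact: (bmin_le ord0 d (fun j => pbar c j)).
  rewrite invf_div expr_div_n s2 /rho_i.
  have := pL0 c; have := pH0 c => h1 h2.
  by rewrite le_eqVlt; apply/orP; left; apply/eqP; field; rewrite ?gt_eqF.
have h1 : 0 <= pbar a b / s a / (pbar c d / s c) by rewrite ltW // divr_gt0.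
rewrite -ler_sqr ?nnegrE //.
rewrite exprMn [X in _ <= X]expr2.
apply: ler_pM => //; apply: exprn_ge0; [exact: ltW | by rewrite invr_ge0 ltW].
Qed.
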